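(* Let $r\ge1$ and let $G_r(t,u,v,z)=\sum_w t^{\mathrm{length}(w)}u^{\mathrm{asc}(w)}v^{\mathrm{last}(w)}z^{\mathrm{zeros}(w)}$, summed over all ascent sequences $w=(x_1,\dots,x_n)$ with $n\ge r+1$, $x_1=\dots=x_r=0$ and $x_{r+1}=1$. Then $$(v-1-tv(1-u))\,G_r(t,u,v,z)=(v-1)t^{r+1}uvz^r+t((v-1)z-v)\,G_r(t,u,1,z)+tuv^2\,G_r(t,uv,1,z).$$
   Context: An ascent sequence of length $n$ is a sequence $(x_1,\dots,x_n)$ of nonnegative integers with $x_1=0$ and $x_i\in[0,1+\mathrm{asc}(x_1,\dots,x_{i-1})]$ for $2\le i\le n$, where $\mathrm{asc}(y_1,\dots,y_k)=|\{1\le j<k: y_j<y_{j+1}\}|$. For an ascent sequence $w$: $\mathrm{length}(w)$ is its number of entries, $\mathrm{asc}(w)$ its number of ascents, $\mathrm{last}(w)$ its rightmost entry, $\mathrm{zeros}(w)$ its number of entries equal to 0. $G_r$ is a formal power series in $t$ with polynomial coefficients in $u,v,z$; $G_r(t,u,1,z)$ and $G_r(t,uv,1,z)$ denote the substitutions $v\mapsto1$ and $(u,v)\mapsto(uv,1)$ respectively. *)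

(* Defs.v *)
From mathcomp Require Import all_boot all_order all_algebra.
Set Implicit Arguments. Unset Strict Implicit. Unset Printing Implicit Defensive.
Import GRing.Theory.
Local Open Scope ring_scope.

Fixpoint asc (s : seq nat) : nat :=
  match s with
  | x :: ((y :: _) as t) => ((x < y)%N : nat) + asc t
  | _ => 0%N
  end.

(* ascent sequence: x_1 = 0 and x_i <= 1 + asc(x_1..x_{i-1}) for 2 <= i <= n
   (indices here are 0-based: entry i, prefix take i s). *)
Definition ascent_seq (s : seq nat) : bool :=
  ((s == [::]) || (head 0%N s == 0%N)) &&
  all (fun i => nth 0%N s i <= (asc (take i s)).+1)%N (iota 1 (size s).-1).

Definition last_entry (s : seq nat) : nat := last 0%N s.
Definition zeros (s : seq nat) : nat := count (pred1 0%N) s.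

Definition Gcond (r : nat) (s : seq nat) : bool :=
  [&& (r < size s)%N, all (pred1 0%N) (take r s) & nth 0%N s r == 1%N].

(* Coefficient of t^n in G_r(t,u,v,z), evaluated at u v z in a commutative ring R.
   Every ascent sequence of length n has all entries < n, so ranging over
   n-tuples of 'I_n enumerates all ascent sequences of length n. *)
Definition Gcoef (R : comNzRingType) (r n : nat) (u v z : R) : R :=
  \sum_(w : n.-tuple 'I_n | ascent_seq (map val w) && Gcond r (map val w))
     u ^+ asc (map val w) * v ^+ last_entry (map val w) * z ^+ zeros (map val w).

(* Coefficient of t^n in t * G_r(t,u,v,z). *)
Definition tGcoef (R : comNzRingType) (r n : nat) (u v z : R) : R :=
  match n with 0%N => 0 | m.+1 => Gcoef r m u v z end.

(* Main.v *)
Require Import Defs.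
From mathcomp Require Import all_boot all_order all_algebra.
From mathcomp Require Import ring.
Import GRing.Theory.
Local Open Scope ring_scope.

Lemma asc_cons_rcons a t x :
  asc (rcons (a :: t) x) = (asc (a :: t) + (last a t < x))%N.
Proof.
elim: t a => [|b t IH] a; first by rewrite /= addn0.
rewrite rcons_cons.
change (asc (a :: rcons (b::t) x)) with ((a<b) + asc (rcons (b::t) x))%N.
rewrite IH addnA.
by [].
Qed.

Lemma ascent_seq_rcons s x :
  ascent_seq (rcons s x) =
  ascent_seq s && (if s is a :: t then (x <= (asc s).+1)%N else x == 0%N).
Proof.
case: s => [|a t]; first by rewrite /ascent_seq /= andbT.
have E1 : head 0%N (rcons (a::t) x) = a by [].
have E2 : (rcons (a::t) x == [::]) = false by [].
have E3 : (a::t == [::]) = false by [].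
rewrite /ascent_seq size_rcons E1 E2 E3 succnK -andbA; congr andb.
rewrite [size (a::t)]/= succnK -[(size t).+1]addn1 iotaD all_cat.
congr andb; last first.
  rewrite all_seq1 add1n nth_rcons ltnn eqxx.
  by rewrite -cats1 -[(size t).+1]/(size (a :: t)) take_size_cat.
apply: eq_in_all => i; rewrite mem_iota => /andP [_ hi].
have hi' : (i < size (a::t))%N by rewrite add1n in hi.
rewrite nth_rcons hi' -cats1 takel_cat //.
by apply: ltnW.
Qed.

Definition bnd (s : seq nat) : nat := if s is _ :: _ then (asc s).+2 else 1%N.
Fixpoint V n : seq (seq nat) :=
  if n is m.+1 then [seq rcons s x | s <- V m, x <- iota 0 (bnd s)] else [:: [::]].

Lemma mem_bnd s x :
  (x \in iota 0 (bnd s)) = (if s is _ :: _ then (x <= (asc s).+1)%N else x == 0%N).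
Proof. by rewrite mem_iota add0n; case: s => [|a t] //=; rewrite ltnS leqn0. Qed.

Lemma memV n s : (s \in V n) = (size s == n) && ascent_seq s.
Proof.
elim: n s => [|n IH] s.
  by case: s => [|a t] //=; rewrite in_cons in_nil orbF.
case/lastP: s => [|s x].
  apply/allpairsPdep => -[s' [x' [_ _]]]; by case: s'.
rewrite size_rcons eqSS ascent_seq_rcons.
rewrite andbA -IH -mem_bnd.
apply/allpairsPdep/andP.
  move=> [s' [x' [h1 h2 /rcons_inj [-> ->]]]]; by split.
by move=> [h1 h2]; exists s, x.
Qed.

Lemma uniqV n : uniq (V n).
Proof.
elim: n => [|n IH] //=.
apply: allpairs_uniq_dep => //.
  by move=> s _; apply: iota_uniq.
move=> [s1 x1] [s2 x2] _ _ /= /rcons_inj [E1 E2].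
by subst.
Qed.

Lemma asc_le s : (asc s <= (size s).-1)%N.
Proof.
elim: s => [|a t IH] //.
case: t IH => [|b t] IH //=.
rewrite -[(size t).+1]add1n leq_add //; by case: (a < b)%N.
Qed.

Lemma ascent_bound s : ascent_seq s -> all (fun x => x < size s)%N s.
Proof.
elim/last_ind: s => [|s x IH] //.
rewrite ascent_seq_rcons => /andP [hs hx].
rewrite all_rcons size_rcons; apply/andP; split.
  case: s {IH hs} hx => [|a t]; first by move/eqP->.
  move=> hx; apply: (leq_trans hx); rewrite ltnS.
  by have := asc_le (a :: t).
apply/allP => y hy; have := allP (IH hs) y hy.
by move=> h; apply: ltnW.
Qed.

Lemma map_val_pmap n (s : seq nat) : all (fun x => x < n)%N s ->
  map val (pmap (insub : nat -> option 'I_n) s) = s.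
Proof.
elim: s => [|x s IH] //= /andP [hx hs].
by rewrite (insubT (fun x => x < n)%N hx) /= IH.
Qed.

Definition F {R : comNzRingType} (u v z : R) (s : seq nat) : R :=
  u ^+ asc s * v ^+ last_entry s * z ^+ zeros s.

Lemma GcoefE (R : comNzRingType) r n (u v z : R) :
  Gcoef r n u v z = \sum_(s <- V n | Gcond r s) F u v z s.
Proof.
rewrite /Gcoef.
rewrite -(big_map (fun w : n.-tuple 'I_n => map val (tval w))
   (fun s => ascent_seq s && Gcond r s) (F u v z)).
rewrite -big_filter_cond.
apply: perm_big.
apply: uniq_perm; first 2 last.
- move=> s; rewrite mem_filter memV.
  apply/andP/andP => -[ha hm]; split => //.
    move/mapP: hm => [w _ ->]; by rewrite size_map size_tuple.
  have hall := ascent_bound s hm.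
  rewrite (eqP ha) in hall.
  apply/mapP.
  have hw : size (pmap (insub : nat -> option 'I_n) s) == n.
    by rewrite size_pmap_sub; move: hall; rewrite all_count => /eqP ->.
  exists (Tuple hw); first by rewrite mem_index_enum.
  by rewrite /= map_val_pmap.
- apply: filter_uniq; rewrite map_inj_uniq ?index_enum_uniq //.
  move=> w1 w2 /= E; apply: val_inj; apply: (inj_map val_inj E).
- exact: uniqV.
Qed.

Lemma alg_sum (R : comNzRingType) (u v z : R) (a l c k : nat) :
  (v - 1) * \sum_(0 <= x < k) u ^+ (a + (l < x)%N) * v ^+ x * z ^+ (c + (x == 0%N))
  = u ^+ a * z ^+ c * ((if (0 < k)%N then (z - 1) * (v - 1) else 0)
       + v ^+ (minn k l.+1) - 1 + u * (v ^+ k - v ^+ (minn k l.+1))).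
Proof.
elim: k => [|k IH].
  rewrite big_geq // mulr0 /= min0n expr0. ring.
rewrite big_nat_recr //= mulrDr IH.
case: k IH => [|k] IH.
  rewrite /= addn0 minnSS !min0n !expr0 expr1 exprD expr1.
  ring.
rewrite /= addn0.
case: (leqP k.+1 l) => hkl.
  have h1 : minn k.+1 l.+1 = k.+1 by apply/minn_idPl; rewrite ltnW // ltnS.
  have h2 : minn k.+2 l.+1 = k.+2 by apply/minn_idPl; rewrite ltnS.
  have h3 : (l < k.+1)%N = false by rewrite ltnNge hkl.
  rewrite h1 h2 addn0 !exprS.
  ring.
have h1 : minn k.+1 l.+1 = l.+1 by apply/minn_idPr.
have h2 : minn k.+2 l.+1 = l.+1 by apply/minn_idPr; rewrite ltnW.
rewrite h1 h2 addn1 !exprS.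
ring.
Qed.

Lemma zeros_rcons s x : zeros (rcons s x) = (zeros s + (x == 0%N))%N.
Proof. by rewrite /zeros -cats1 count_cat /= addn0. Qed.

Lemma V_succ (R : comNzRingType) (G : seq nat -> R) n :
  \sum_(s <- V n.+1) G s = \sum_(s <- V n) \sum_(0 <= x < bnd s) G (rcons s x).
Proof.
rewrite [V n.+1]/= big_allpairs_dep; apply: eq_bigr => s _.
by rewrite /index_iota subn0.
Qed.

Lemma Gcond_small s r : (size s <= r)%N -> Gcond r s = false.
Proof. by move=> h; rewrite /Gcond ltnNge h. Qed.

Lemma Gcond_rcons_gt s x r : (r < size s)%N -> Gcond r (rcons s x) = Gcond r s.
Proof.
move=> h; rewrite /Gcond size_rcons h ltnW // nth_rcons h.
by rewrite -cats1 takel_cat // ltnW.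
Qed.

Lemma Gcond_rcons_eq s x r : size s = r ->
  Gcond r (rcons s x) = all (pred1 0%N) s && (x == 1%N).
Proof.
move=> h; rewrite /Gcond size_rcons -h ltnSn -cats1 take_size_cat //.
by rewrite nth_cat ltnn subnn.
Qed.

Lemma sum0 (R : comNzRingType) (G : seq nat -> R) k r : (k <= r)%N ->
  \sum_(s <- V k | Gcond r s) G s = 0.
Proof.
move=> hk; rewrite big_seq_cond big1 // => s /andP [hs hg].
move: hs; rewrite memV => /andP [/eqP hsz _].
by rewrite Gcond_small ?hsz in hg.
Qed.

Lemma sum_step (R : comNzRingType) (G : seq nat -> R) m r : (r < m)%N ->
  \sum_(s <- V m.+1 | Gcond r s) G s =
  \sum_(s <- V m | Gcond r s) \sum_(0 <= x < bnd s) G (rcons s x).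
Proof.
move=> hrm; rewrite big_mkcond V_succ [RHS]big_mkcond big_seq [RHS]big_seq.
apply: eq_bigr => s hs.
move: hs; rewrite memV => /andP [/eqP hsz _].
have h : (r < size s)%N by rewrite hsz.
case hg: (Gcond r s).
  by apply: eq_bigr => x _; rewrite Gcond_rcons_gt // hg.
by apply: big1 => x _; rewrite Gcond_rcons_gt // hg.
Qed.

Lemma asc_nseq k : asc (nseq k 0%N) = 0%N.
Proof. by elim: k => [|[|k] IH] //. Qed.

Lemma nseqSr k : nseq k.+1 0%N = rcons (nseq k 0%N) 0%N.
Proof. by rewrite -cats1 -[[:: 0%N]]/(nseq 1 0%N) -nseqD addn1. Qed.

Lemma ascent_nseq k : ascent_seq (nseq k 0%N).
Proof.
elim: k => [|k IH] //.
rewrite nseqSr.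
rewrite ascent_seq_rcons IH /=.
by case: k {IH}.
Qed.

Lemma last_bound a t : ascent_seq (a :: t) -> (last a t <= (asc (a :: t)).+1)%N.
Proof.
case/lastP: t => [|t y].
  by rewrite /ascent_seq /= andbT => /eqP ->.
rewrite last_rcons -rcons_cons ascent_seq_rcons => /andP [_ hy].
apply: (leq_trans hy); rewrite asc_cons_rcons ltnS.
exact: leq_addr.
Qed.

Lemma last_nseq0 k : last 0%N (nseq k 0%N) = 0%N.
Proof. by case: k => [|k] //; rewrite nseqSr last_rcons. Qed.

Lemma sum_base (R : comNzRingType) (u v z : R) r :
  \sum_(s <- V r.+2 | Gcond r.+1 s) F u v z s = u * v * z ^+ r.+1.
Proof.
rewrite big_mkcond V_succ.
rewrite (bigD1_seq (nseq r.+1 0%N) _ (uniqV _)); last first.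
  by rewrite memV size_nseq eqxx ascent_nseq.
set Y := \big[_/_]_(i <- V r.+1 | _) _.
have -> : Y = 0.
  rewrite /Y big_seq_cond; apply: big1.
  move=> s /andP [hs hne]; move: hs; rewrite memV => /andP [/eqP hsz _].
  apply: big1 => x _; rewrite Gcond_rcons_eq //.
  case: all_pred1P => [E|_] //.
  by rewrite hsz in E; rewrite E eqxx in hne.
rewrite Monoid.mulm1.
have hb : bnd (nseq r.+1 0%N) = (asc (nseq r.+1 0%N)).+2 by [].
rewrite hb asc_nseq big_nat_recr // big_nat_recr // big_geq //.
rewrite Monoid.mul1m !Gcond_rcons_eq ?size_nseq // all_pred1_nseq /=.
rewrite add0r -[0%N :: rcons (nseq r 0%N) 1%N]/(rcons (nseq r.+1 0%N) 1%N).
rewrite /F /last_entry last_rcons zeros_rcons /zeros count_nseq.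
rewrite -[nseq r.+1 0%N]/(0%N :: nseq r 0%N) asc_cons_rcons.
rewrite -[0%N :: nseq r 0%N]/(nseq r.+1 0%N) asc_nseq last_nseq0 /=.
by rewrite mul1n addn0 !expr1.
Qed.

Lemma per_s (R : comNzRingType) (u v z : R) a t : ascent_seq (a :: t) ->
  (v - 1) * \sum_(0 <= x < bnd (a :: t)) F u v z (rcons (a :: t) x)
  - v * (1 - u) * F u v z (a :: t)
  = ((v - 1) * z - v) * F u 1 z (a :: t) + u * v ^+ 2 * F (u * v) 1 z (a :: t).
Proof.
move=> ha.
have hl := last_bound a t ha.
have -> : bnd (a :: t) = (asc (a :: t)).+2 by [].
under eq_bigr => x _ do rewrite /F /last_entry last_rcons asc_cons_rcons zeros_rcons.
rewrite alg_sum.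
have -> : minn (asc (a :: t)).+2 (last a t).+1 = (last a t).+1.
  by apply/minn_idPr; rewrite ltnS.
rewrite /F /last_entry.
have -> : last 0%N (a :: t) = last a t by [].
rewrite /= expr1n exprMn !exprS.
ring.
Qed.

Theorem lemma2 (R : comNzRingType) (r : nat) (hr : (1 <= r)%N) (u v z : R) (n : nat) :
  (v - 1) * Gcoef r n u v z - v * (1 - u) * tGcoef r n u v z =
  (v - 1) * u * v * z ^+ r * (n == r.+1)%:R
  + ((v - 1) * z - v) * tGcoef r n u 1 z
  + u * v ^+ 2 * tGcoef r n (u * v) 1 z.
Proof.
rewrite /tGcoef; case: n => [|m].
  rewrite GcoefE (sum0 _ (F u v z) 0 r) //.
  by rewrite (_ : (0%N == r.+1) = false) // mulr0n !mulr0 subr0 !addr0.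
rewrite !GcoefE.
case: (ltngtP m r) => hmr.
- have hle : (m <= r)%N by apply: ltnW.
  rewrite (sum0 _ (F u v z) m.+1 r) // (sum0 _ (F u v z) m r) //.
  rewrite (sum0 _ (F u 1 z) m r) // (sum0 _ (F (u * v) 1 z) m r) //.
  rewrite eqSS ltn_eqF //.
  by rewrite mulr0n !mulr0 subr0 !addr0.
- rewrite eqSS gtn_eqF // mulr0n mulr0 add0r (sum_step _ (F u v z) m r) //.
  rewrite !mulr_sumr -sumrB -big_split.
  rewrite big_seq_cond [RHS]big_seq_cond; apply: eq_bigr => s /andP [hs hg].
  move: hs; rewrite memV => /andP [/eqP hsz ha].
  case: s hsz ha hg => [|a t] hsz ha hg.
    by rewrite -hsz in hmr.
  by rewrite (per_s _ u v z a t ha).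
- subst m; case: r hr => [|r] // _.
  rewrite sum_base (sum0 _ (F u v z) r.+1 r.+1) // (sum0 _ (F u 1 z) r.+1 r.+1) //.
  rewrite (sum0 _ (F (u * v) 1 z) r.+1 r.+1) // eqxx.
  by rewrite !mulr0 subr0 !addr0 mulr1 !mulrA.
Qed.
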